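(* Let $\mathcal{Z}_0$ be the signaling scheme output by the Split-and-Match procedure on $\mathcal{D}$. Then for every signaling scheme $\mathcal{Z}'$ for $\mathcal{D}$ and every $m\in(0,1]$, \[4\int_0^m s_{\mathcal{Z}_0}(x)\,dx\ \ge\ \int_0^m s_{\mathcal{Z}'}(x)\,dx.\]
   Context: Values and prior. $0<v_1<\dots<v_n$ are reals, and $v_0:=0$. $\mathcal{D}$ is a distribution on $\{v_1,\dots,v_n\}$ with $f_{\mathcal{D}}(v_i)>0$ and CDF $F_{\mathcal{D}}$. Signals and pricing. A signal is a distribution $S$ on these values, with $G_S(p)=\Pr_{v\sim S}[v\ge p]$. The seller posts $p^*_S$, the smallest $v$ in the support of $S$ maximizing $v\,G_S(v)$. The surplus of value $v$ is $cs_v(S)=\mathbb{1}[v\ge p^*_S](v-p^*_S)$. Signaling schemes. A signaling scheme is $\mathcal{Z}=\{(S_q,\gamma_q)\}_{q\in[Q]}$ with $\gamma_q\ge0$, $\sum\gamma_q=1$ and $\sum_q\gamma_q f_{S_q}=f_{\mathcal{D}}$. Its expected consumer surplus at $v_i$ is $cs_{v_i}(\mathcal{Z})=\sum_q cs_{v_i}(S_q)\gamma_q f_{S_q}(v_i)/f_{\mathcal{D}}(v_i)$. The surplus-mass function $s_{\mathcal{Z}}$ on $(0,1]$ equals $cs_{v_i}(\mathcal{Z})$ on $(F_{\mathcal{D}}(v_{i-1}),F_{\mathcal{D}}(v_i)]$. Special signals. For $a<b$ in $\{v_1,\dots,v_n\}$, the equal-revenue binary signal $S^E_{a,b}$ puts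 mass $1-a/b$ on $a$ and $a/b$ on $b$. A singleton signal on $v_i$ puts mass $1$ on $v_i$. Split-and-Match procedure. 1. Initialize $g_i=t_i=\tfrac12 f_{\mathcal{D}}(v_i)$ for all $i$. 2. Repeat: - let $s$ be the smallest index with $g_s>0$; - let $\ell$ be the smallest index $>s$ with $t_\ell>0$; - if no such pair $(s,\ell)$ exists, stop; - otherwise add the signal $S^E_{v_s,v_\ell}$ with weight $\gamma=\min\{g_s/(1-v_s/v_\ell),\ t_\ell/(v_s/v_\ell)\}$; - set $g_s\leftarrow g_s-\gamma(1-v_s/v_\ell)$ and $t_\ell\leftarrow t_\ell-\gamma v_s/v_\ell$. 3. Finally, for each $i$, the mass of $\mathcal{D}$ at $v_i$ not yet used by the added binary signals is covered by a singleton signal on $v_i$ with weight equal to that remaining mass. The resulting family is $\mathcal{Z}_0$. *)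

(* Defs.v *)
From HB Require Import structures.
From mathcomp Require Import all_boot all_order all_algebra.
From mathcomp Require Import all_classical all_reals all_analysis.
Set Implicit Arguments. Unset Strict Implicit. Unset Printing Implicit Defensive.
Import Order.TTheory GRing.Theory Num.Theory.
Local Open Scope ring_scope.

(* Values are indexed by 'I_n (0-based): v i for i : 'I_n is v_{i+1} of the
   paper.  A distribution on {v_1..v_n} is a finite function 'I_n -> R. *)

Section SplitMatch.
Variables (R : realType) (n : nat) (v : 'I_n -> R).

Definition signal := {ffun 'I_n -> R}.

Definition is_signal (S : signal) : Prop :=
  (forall i, 0 <= S i) /\ \sum_i S i = 1.

Definition GS (S : signal) (p : R) : R := \sum_(j | p <= v j) S j.

Definition first_idx (P : pred 'I_n) : option 'I_n :=
  [pick i | P i && [forall k : 'I_n, (k < i)%N ==> ~~ P k]].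

Definition rev_opt (S : signal) (i : 'I_n) : bool :=
  (0 < S i) && [forall j : 'I_n, (0 < S j) ==> (v j * GS S (v j) <= v i * GS S (v i))].

(* p*_S : the smallest value in the support maximizing v G_S(v)
   (v is increasing, so smallest value = smallest index) *)
Definition price (S : signal) : R :=
  match first_idx (rev_opt S) with Some i => v i | None => 0 end.

Definition cs (S : signal) (x : R) : R :=
  if price S <= x then x - price S else 0.

Definition scheme := seq (signal * R).

Definition is_scheme (f : 'I_n -> R) (Z : scheme) : Prop :=
  (forall q, q \in Z -> is_signal q.1 /\ 0 <= q.2) /\
  \sum_(q <- Z) q.2 = 1 /\
  (forall i, \sum_(q <- Z) q.2 * q.1 i = f i).

Definition cs_scheme (f : 'I_n -> R) (Z : scheme) (i : 'I_n) : R :=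
  \sum_(q <- Z) cs q.1 (v i) * q.2 * q.1 i / f i.

Definition Fprev (f : 'I_n -> R) (i : 'I_n) : R := \sum_(j : 'I_n | (j < i)%N) f j.
Definition Fcur (f : 'I_n -> R) (i : 'I_n) : R := \sum_(j : 'I_n | (j <= i)%N) f j.

(* surplus-mass function: equals cs_{v_i}(Z) on (F(v_{i-1}), F(v_i)],
   and 0 outside (0,1] (irrelevant below) *)
Definition surplus_mass (f : 'I_n -> R) (Z : scheme) (x : R) : R :=
  \sum_i (if (Fprev f i < x) && (x <= Fcur f i) then cs_scheme f Z i else 0).

Definition eq_rev_signal (a b : 'I_n) : signal :=
  [ffun i => if i == a then 1 - v a / v b else if i == b then v a / v b else 0].

Definition singleton_signal (a : 'I_n) : signal := [ffun i => if i == a then 1 else 0].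

(* The Split-and-Match loop (step 2); each iteration sets some g_s or t_l
   to exactly 0, so it stops after at most 2n iterations: fuel 2n+1 suffices. *)
Fixpoint sm_loop (fuel : nat) (g t : {ffun 'I_n -> R}) (acc : scheme) : scheme :=
  match fuel with
  | 0%N => acc
  | fuel'.+1 =>
    match first_idx (fun s => 0 < g s) with
    | None => acc
    | Some s =>
      match first_idx (fun l => (s < l)%N && (0 < t l)) with
      | None => acc
      | Some l =>
        let r := v s / v l in
        let gam := Num.min (g s / (1 - r)) (t l / r) in
        let g' := [ffun i => if i == s then g s - gam * (1 - r) else g i] in
        let t' := [ffun i => if i == l then t l - gam * r else t i] in
        sm_loop fuel' g' t' (rcons acc (eq_rev_signal s l, gam))
      end
    end
  end.

Definition sm_binary (f : 'I_n -> R) : scheme :=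
  sm_loop (2 * n).+1 [ffun i => f i / 2] [ffun i => f i / 2] [::].

Definition split_and_match (f : 'I_n -> R) : scheme :=
  let B := sm_binary f in
  B ++ [seq (singleton_signal i, f i - \sum_(q <- B) q.2 * q.1 i) | i <- enum 'I_n].

End SplitMatch.

(* Main.v *)
Require Import Defs.
From HB Require Import structures.
From mathcomp Require Import all_boot all_order all_algebra.
From mathcomp Require Import all_classical all_reals all_analysis.
From mathcomp Require Import ring lra.
From Stdlib Require Import Classical.
Import Order.TTheory GRing.Theory Num.Theory.
Local Open Scope ring_scope.
Set Implicit Arguments. Unset Strict Implicit. Unset Printing Implicit Defensive.

Section FirstIdx.
Variable n : nat.

Lemma first_idxP (P : pred 'I_n) (i : 'I_n) :
  first_idx P = Some i -> P i /\ (forall k : 'I_n, (k < i)%N -> ~~ P k).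
Proof.
rewrite /first_idx; case: pickP => // x /andP[Px /forallP H] [<-].
split=> // k kx; exact: (implyP (H k) kx).
Qed.

Lemma first_idx_min (P : pred 'I_n) (i : 'I_n) :
  P i -> exists j : 'I_n, P j /\ (forall k : 'I_n, (k < j)%N -> ~~ P k).
Proof.
move=> Pi.
have ex : exists m, [exists k : 'I_n, (nat_of_ord k == m) && P k].
  exists (nat_of_ord i); apply/existsP; exists i; rewrite eqxx; exact: Pi.
case: (ex_minnP ex) => m /existsP [j /andP [/eqP jm Pj]] Hmin.
exists j; split; first exact: Pj.
move=> k kj; apply/negP => Pk.
have : (m <= k)%N.
  apply: Hmin; apply/existsP; exists k; rewrite eqxx; exact: Pk.
rewrite -jm leqNgt kj; done.
Qed.

Lemma first_idxNone (P : pred 'I_n) :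
  first_idx P = None -> forall i, ~~ P i.
Proof.
rewrite /first_idx; case: pickP => [x _|H] // _ i; apply/negP => Pi.
have [j [Pj Hj]] := first_idx_min Pi.
have Hf : [forall k : 'I_n, (k < j)%N ==> ~~ P k].
  apply/forallP => k; apply/implyP => kj; exact: Hj.
have := H j. rewrite Pj Hf. done.
Qed.

Lemma first_idx_uniq (P : pred 'I_n) (i j : 'I_n) :
  P i -> (forall k : 'I_n, (k < i)%N -> ~~ P k) ->
  P j -> (forall k : 'I_n, (k < j)%N -> ~~ P k) -> i = j.
Proof.
move=> Pi Hi Pj Hj; apply: val_inj.
case: (ltngtP i j) => // H.
  by move: (Hj _ H); rewrite Pi.
by move: (Hi _ H); rewrite Pj.
Qed.

Lemma first_idxE (P : pred 'I_n) (i : 'I_n) :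
  P i -> (forall k : 'I_n, (k < i)%N -> ~~ P k) -> first_idx P = Some i.
Proof.
move=> Pi Hi; case E: (first_idx P) => [j|].
  have [Pj Hj] := first_idxP E.
  by rewrite (first_idx_uniq Pj Hj Pi Hi).
by move: (first_idxNone E i); rewrite Pi.
Qed.

End FirstIdx.


Section Signals.
Variables (R : realType) (n : nat) (v : 'I_n -> R).
Hypothesis v_pos : forall i, 0 < v i.
Hypothesis v_incr : forall i j : 'I_n, (i < j)%N -> v i < v j.

Lemma vle i j : (v i <= v j) = (i <= j)%N.
Proof.
case: (leqP i j) => H.
  rewrite leq_eqVlt in H; case/orP: H => H.
    by rewrite (val_inj (eqP H)) lexx.
  exact: ltW (v_incr H).
by apply/negbTE; rewrite -ltNge; apply: v_incr.
Qed.

Lemma GSE (S : signal R n) j : GS v S (v j) = \sum_(i : 'I_n | (j <= i)%N) S i.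
Proof. by apply: eq_bigl => i; rewrite vle. Qed.

Lemma GS_ge0 (S : signal R n) p : (forall i, 0 <= S i) -> 0 <= GS v S p.
Proof. by move=> H; apply: sumr_ge0 => i _. Qed.

Lemma sum_geq_split (S : signal R n) (j : 'I_n) :
  \sum_(i : 'I_n | (j <= i)%N) S i = S j + \sum_(i : 'I_n | (j < i)%N) S i.
Proof.
rewrite (bigD1 j) //=; congr (_ + _); apply: eq_bigl => i.
by rewrite ltn_neqAle andbC eq_sym.
Qed.

Lemma rev_bound (S : signal R n) (j0 : 'I_n) :
  (forall i, 0 <= S i) -> rev_opt v S j0 ->
  forall j, v j * GS v S (v j) <= v j0 * GS v S (v j0).
Proof.
move=> S0 /andP [_ /forallP Hopt].
have R0 : 0 <= v j0 * GS v S (v j0).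
  by apply: mulr_ge0; [exact: ltW (v_pos j0) | exact: GS_ge0].
suff H : forall d (j : 'I_n), (n - j <= d)%N -> v j * GS v S (v j) <= v j0 * GS v S (v j0).
  by move=> j; apply: (H (n - j)%N).
elim=> [|d IH] j jd.
  by move: jd; rewrite leqn0 subn_eq0 leqNgt ltn_ord.
case: (boolP (0 < S j)) => Sj.
  exact: (implyP (Hopt j) Sj).
have Sj0 : S j = 0.
  by apply/eqP; rewrite eq_le (S0 j) andbT leNgt.
case: (ltnP j.+1 n) => jn.
  pose j' := Ordinal jn.
  have GSj : GS v S (v j) = GS v S (v j').
    by rewrite !GSE sum_geq_split Sj0 add0r.
  rewrite GSj; apply: le_trans (IH j' _).
    apply: ler_wpM2r; first exact: GS_ge0.
    by rewrite vle /= leqnSn.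
  by rewrite /= subnS -ltnS (leq_trans _ jd) // prednK // subn_gt0.
rewrite GSE sum_geq_split Sj0 add0r big1 ?mulr0 // => i ji.
by move: (leq_trans (ltn_ord i) jn); rewrite ltnS leqNgt ji.
Qed.

Lemma signal_support (S : signal R n) : is_signal S -> exists i, 0 < S i.
Proof.
case=> S0 S1; case: (pickP (fun i => 0 < S i)) => [i Si|H]; first by exists i.
have : \sum_i S i = 0.
  apply: big1 => i _; apply/eqP; rewrite eq_le S0 andbT leNgt; by rewrite H.
by rewrite S1 => /eqP; rewrite oner_eq0.
Qed.

Lemma price_spec (S : signal R n) : is_signal S ->
  exists j0, rev_opt v S j0 /\ price v S = v j0.
Proof.
move=> HS; have [i0 Si0] := signal_support HS.
have [im Pim Him] := @arg_maxP _ R _ i0 (fun i => 0 < S i) (fun i => v i * GS v S (v i)) Si0.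
have Ropt : rev_opt v S im.
  rewrite /rev_opt Pim /=; apply/forallP => j; apply/implyP => Sj; exact: Him.
have [j0 [Pj0 Hj0]] := first_idx_min Ropt.
exists j0; split => //; by rewrite /price (first_idxE Pj0 Hj0).
Qed.

End Signals.


Section Bounds.
Variables (R : realType) (n : nat) (v : 'I_n -> R).
Hypothesis v_pos : forall i, 0 < v i.
Hypothesis v_incr : forall i j : 'I_n, (i < j)%N -> v i < v j.

Lemma sig_bound0 (S : signal R n) (k : nat) : is_signal S ->
  \sum_(i : 'I_n | (i < k)%N) cs v S (v i) * S i <= \sum_(i : 'I_n | (i < k)%N) S i * v i.
Proof.
move=> HS; have [j0 [_ Hp]] := price_spec v HS.
apply: ler_sum => i _; rewrite /cs Hp; case: ifP => _.
  have := v_pos j0; have := HS.1 i; nra.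
have := v_pos i; have := HS.1 i; nra.
Qed.

Lemma sig_bound (S : signal R n) (k : nat) (j : 'I_n) : is_signal S ->
  \sum_(i : 'I_n | (i < k)%N) cs v S (v i) * S i
   + v j * \sum_(i : 'I_n | (j <= i)%N && (i < k)%N) S i
  <= \sum_(i : 'I_n | (i < k)%N) S i * v i.
Proof.
move=> HS; have [j0 [Hopt Hp]] := price_spec v HS.
have S0 := HS.1.
have csE i : cs v S (v i) = if (j0 <= i)%N then v i - v j0 else 0.
  by rewrite /cs Hp (vle v_incr).
case: (ltnP j j0) => jj0.
  rewrite big_mkcondl /= mulr_sumr -big_split /=.
  apply: ler_sum => i _; rewrite csE.
  have vjj0 : v j <= v j0 by rewrite (vle v_incr) ltnW.
  case: (leqP j0 i) => ji0.
    have -> : (j <= i)%N by apply: leq_trans (ltnW jj0) ji0.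
    have := mulr_ge0 (S0 i) (eq_ind_r is_true vjj0 (subr_ge0 (v j) (v j0))) => h; nra.
  case: (leqP j i) => ji.
    have vji : v j <= v i by rewrite (vle v_incr).
    have := S0 i; nra.
  have := S0 i; have := v_pos i; nra.
pose P x := \sum_(i : 'I_n | (x <= i)%N && (i < k)%N) S i.
have key : v j * P j <= v j0 * P j0.
  case: (ltnP j k) => jk.
    pose H := \sum_(i : 'I_n | (k <= i)%N) S i.
    have Gs (x : 'I_n) : (x < k)%N -> GS v S (v x) = P x + H.
      move=> xk; rewrite (GSE v_incr) (bigID (fun i : 'I_n => (i < k)%N)) /=.
      congr (_ + _); apply: eq_bigl => i; rewrite -leqNgt.
      case: (leqP k i) => ki; last by rewrite andbF.
      by rewrite andbT (leq_trans (ltnW xk) ki).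
    have h1 := rev_bound v_pos v_incr S0 Hopt j.
    rewrite !Gs // in h1; last by apply: leq_ltn_trans jj0 jk.
    have h2 : v j0 * H <= v j * H.
      apply: ler_wpM2r; first by apply: sumr_ge0.
      by rewrite (vle v_incr).
    rewrite !mulrDr in h1; lra.
  have -> : P j = 0.
    apply: big_pred0 => i; apply/negbTE; rewrite negb_and -leqNgt.
    case: (leqP j i) => // ji; by rewrite (leq_trans jk ji).
  rewrite mulr0; apply: mulr_ge0; first exact: ltW (v_pos j0).
  by apply: sumr_ge0.
apply: le_trans (lerD (lexx _) key) _.
rewrite /P big_mkcondl /= mulr_sumr -big_split /=.
apply: ler_sum => i _; rewrite csE.
case: (leqP j0 i) => ji0; first lra.
have := S0 i; have := v_pos i; nra.
Qed.

Lemma sum_if_eq (P : pred 'I_n) (s : 'I_n) (c : R) :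
  \sum_(i | P i) (if i == s then c else 0) = if P s then c else 0.
Proof.
rewrite -big_mkcondr; case: ifP => Ps.
  apply: (big_pred1 s) => i /=; case: (eqVneq i s) => [->|H]; by rewrite ?eqxx ?Ps ?andbT ?andbF.
apply: big_pred0 => i; case: (eqVneq i s) => [->|H]; by rewrite ?eqxx ?Ps ?andbT ?andbF.
Qed.

Lemma eqrev_cs (s l : 'I_n) (i : 'I_n) : (s < l)%N ->
  cs v (eq_rev_signal v s l) (v i) * eq_rev_signal v s l i
   = if i == l then (v l - v s) * (v s / v l) else 0.
Proof.
move=> sl.
set S := eq_rev_signal v s l.
have sl' : s != l by rewrite neq_ltn sl.
have r0 : 0 < v s / v l by apply: divr_gt0.
have r1 : v s / v l < 1 by rewrite ltr_pdivrMr ?mul1r //; apply: v_incr.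
have SE j : S j = (if j == s then 1 - v s / v l else 0) + (if j == l then v s / v l else 0).
  rewrite /S /eq_rev_signal ffunE; case: (eqVneq j s) => [->|js].
    by rewrite (negbTE sl') addr0.
  by rewrite add0r.
have GSs : v s * GS v S (v s) = v s.
  rewrite (GSE v_incr) /=.
  under eq_bigr do rewrite SE.
  rewrite big_split /= !sum_if_eq leqnn (ltnW sl) /=; ring.
have GSl : v l * GS v S (v l) = v s.
  rewrite (GSE v_incr) /=.
  under eq_bigr do rewrite SE.
  rewrite big_split /= !sum_if_eq leqnn leqNgt sl /= add0r.
  by rewrite mulrC divfK // gt_eqF.
have Hopt : rev_opt v S s.
  rewrite /rev_opt SE eqxx (negbTE sl') addr0 subr_gt0 r1 /=.
  apply/forallP => j; apply/implyP; rewrite SE.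
  case: (eqVneq j s) => [->|js]; first by rewrite lexx.
  case: (eqVneq j l) => [->|jl]; first by rewrite GSl GSs lexx.
  by rewrite addr0 ltxx.
have Hmin : forall k : 'I_n, (k < s)%N -> ~~ rev_opt v S k.
  move=> k ks; rewrite /rev_opt SE.
  have -> : (k == s) = false by apply/negbTE; rewrite neq_ltn ks.
  have -> : (k == l) = false by apply/negbTE; rewrite neq_ltn (ltn_trans ks sl).
  by rewrite addr0 ltxx.
have Hp : price v S = v s by rewrite /price (first_idxE Hopt Hmin).
rewrite /cs Hp SE.
case: (eqVneq i l) => [->|il].
  by rewrite eq_sym (negbTE sl') (vle v_incr) (ltnW sl) add0r.
case: (eqVneq i s) => [->|Hi]; first by rewrite lexx subrr !mul0r.
by rewrite addr0 mulr0.
Qed.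

Lemma single_cs (a i : 'I_n) (w : R) :
  cs v (singleton_signal R a) (v i) * w * singleton_signal R a i = 0.
Proof.
set S := singleton_signal R a.
have SE j : S j = if j == a then 1 else 0 by rewrite /S /singleton_signal ffunE.
have Hopt : rev_opt v S a.
  rewrite /rev_opt SE eqxx ltr01 /=; apply/forallP => j; apply/implyP; rewrite SE.
  by case: (eqVneq j a) => [->|]; rewrite ?lexx ?ltxx.
have Hmin : forall k : 'I_n, (k < a)%N -> ~~ rev_opt v S k.
  move=> k ka; rewrite /rev_opt SE.
  have -> : (k == a) = false by apply/negbTE; rewrite neq_ltn ka.
  by rewrite ltxx.
have Hp : price v S = v a by rewrite /price (first_idxE Hopt Hmin).
rewrite SE; case: (eqVneq i a) => [->|]; last by rewrite mulr0.
by rewrite /cs Hp lexx subrr !mul0r.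
Qed.

End Bounds.


Section Alg.
Variables (R : realType) (n : nat) (v : 'I_n -> R) (f : 'I_n -> R).
Hypothesis v_pos : forall i, 0 < v i.
Hypothesis v_incr : forall i j : 'I_n, (i < j)%N -> v i < v j.
Hypothesis f_pos : forall i, 0 < f i.

Definition trip := ('I_n * 'I_n * R)%type.
Definition mk (p : trip) : signal R n * R := (eq_rev_signal v p.1.1 p.1.2, p.2).
Definition rr (p : trip) := v p.1.1 / v p.1.2.

Definition gsum (P : seq trip) (i : 'I_n) := \sum_(p <- P | p.1.1 == i) p.2 * (1 - rr p).
Definition tsum (P : seq trip) (i : 'I_n) := \sum_(p <- P | p.1.2 == i) p.2 * rr p.

Definition firstg (g : {ffun 'I_n -> R}) (s : 'I_n) :=
  0 < g s /\ forall i : 'I_n, (i < s)%N -> g i = 0.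
Definition past (k : nat) (g t : {ffun 'I_n -> R}) :=
  forall s, firstg g s -> forall l : 'I_n, (s < l)%N -> (l < k)%N -> t l = 0.
Definition SC (k : nat) (P : seq trip) :=
  \sum_(p <- P | (p.1.2 < k)%N) p.2 * ((v p.1.2 - v p.1.1) * rr p).
Definition Wk (k : nat) := \sum_(i : 'I_n | (i < k)%N) f i * v i.
Definition Bound (k : nat) (P : seq trip) :=
  (exists j : 'I_n, Wk k - v j * \sum_(i : 'I_n | (j <= i)%N && (i < k)%N) f i <= 4 * SC k P)
  \/ Wk k <= 4 * SC k P.

Lemma sum_eqsel (P : pred 'I_n) (a : 'I_n) (F : 'I_n -> R) :
  \sum_(i | P i) (if a == i then F i else 0) = if P a then F a else 0.
Proof.
rewrite -big_mkcondr; case: ifP => Pa.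
  rewrite (big_pred1 a); first by [].
  move=> i /=; case: (eqVneq a i) => [<-|H]; by rewrite ?eqxx ?Pa ?andbT ?andbF // eq_sym (negbTE H).
apply: big_pred0 => i; case: (eqVneq a i) => [<-|H]; by rewrite ?eqxx ?Pa ?andbT ?andbF.
Qed.

Lemma pair_id (p : trip) :
  p.2 * ((v p.1.2 - v p.1.1) * rr p) = v p.1.1 * (p.2 * (1 - rr p)).
Proof.
rewrite /rr; have := v_pos p.1.2; move=> h; field; by rewrite gt_eqF.
Qed.

Lemma rr_bounds (p : trip) : (p.1.1 < p.1.2)%N -> 0 < rr p /\ rr p < 1.
Proof.
move=> H; split; first by apply: divr_gt0.
by rewrite /rr ltr_pdivrMr ?mul1r //; apply: v_incr.
Qed.

Lemma core_bound k (g t : {ffun 'I_n -> R}) (P : seq trip) :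
  (forall i, 0 <= g i) ->
  (forall i, g i = f i / 2 - gsum P i /\ t i = f i / 2 - tsum P i) ->
  (forall p, p \in P -> (p.1.1 < p.1.2)%N /\ 0 <= p.2) ->
  (forall p, p \in P -> forall i : 'I_n, (i < p.1.1)%N -> g i = 0) ->
  (forall p, p \in P -> (p.1.2 < k)%N) ->
  past k g t -> Bound k P.
Proof.
move=> g0 geq Hp Hg Hk Hpast.
set SCa := \sum_(p <- P) p.2 * ((v p.1.2 - v p.1.1) * rr p).
have SCE : SC k P = SCa.
  rewrite /SC /SCa big_seq_cond [RHS]big_seq_cond; apply: eq_bigl => p.
  case: (boolP (p \in P)) => //= pP; by rewrite (Hk p pP).
have term0 p : p \in P -> 0 <= p.2 * ((v p.1.2 - v p.1.1) * rr p).
  move=> pP; have [sl g0p] := Hp p pP; have [r0 _] := rr_bounds sl.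
  apply: mulr_ge0 => //; apply: mulr_ge0; last exact: ltW.
  by rewrite subr_ge0; apply: ltW; apply: v_incr.
have SC0 : 0 <= SCa by rewrite /SCa big_seq; apply: sumr_ge0 => p pP; exact: term0.
have gsumE : \sum_i v i * gsum P i = SCa.
  rewrite /gsum /SCa.
  under eq_bigr do rewrite mulr_sumr big_mkcond /=.
  rewrite exchange_big /=; apply: eq_bigr => p _.
  rewrite (eq_bigr (fun i => if p.1.1 == i then v i * (p.2 * (1 - rr p)) else 0)).
    by rewrite sum_eqsel /= pair_id.
  by move=> i _; case: ifP.
have gsum0 i : 0 <= gsum P i.
  rewrite /gsum big_seq_cond; apply: sumr_ge0 => p /andP [pP _].
  have [sl g0p] := Hp p pP; have [_ r1] := rr_bounds sl.
  by apply: mulr_ge0 => //; rewrite subr_ge0 ltW.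
rewrite /Bound SCE.
case E: (first_idx (fun s => 0 < g s)) => [s|]; last first.
  right.
  have gz i : g i = 0.
    by apply/eqP; rewrite eq_le g0 andbT leNgt (first_idxNone E i).
  have fE i : f i = 2 * gsum P i.
    by have [h _] := geq i; move: h; rewrite gz => h; lra.
  apply: (@le_trans _ _ (\sum_i f i * v i)).
    rewrite /Wk [X in _ <= X](bigID (fun i : 'I_n => (i < k)%N)) /= lerDl.
    apply: sumr_ge0 => i _; apply: mulr_ge0; exact: ltW.
  have -> : \sum_i f i * v i = 2 * \sum_i v i * gsum P i.
    rewrite mulr_sumr; apply: eq_bigr => i _; rewrite fE; ring.
  rewrite gsumE; lra.
have [gs Hs] := first_idxP E.
have gbelow (i : 'I_n) : (i < s)%N -> g i = 0.
  move=> is'; apply/eqP; rewrite eq_le g0 andbT leNgt; exact: Hs.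
left; exists s.
have split1 : Wk k - v s * \sum_(i : 'I_n | (s <= i)%N && (i < k)%N) f i
   = \sum_(i : 'I_n | (i < k)%N) ((if (i < s)%N then f i * v i else 0)
        + (if (s < i)%N then f i * (v i - v s) else 0)).
  rewrite big_mkcondl /= mulr_sumr /Wk -sumrB; apply: eq_bigr => i _.
  case: (ltngtP i s) => H.
  - rewrite /= mulr0 subr0 addr0 //.
  - rewrite /= add0r; ring.
  - rewrite (val_inj H) /=; ring.
rewrite split1 big_split /=.
have U : \sum_(i : 'I_n | (i < k)%N) (if (i < s)%N then f i * v i else 0) <= 2 * SCa.
  apply: (@le_trans _ _ (\sum_(i : 'I_n) (if (i < s)%N then f i * v i else 0))).
    rewrite [X in _ <= X](bigID (fun i : 'I_n => (i < k)%N)) /= lerDl.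
    apply: sumr_ge0 => i _; case: ifP => _ //; apply: mulr_ge0; exact: ltW.
  rewrite -gsumE mulr_sumr; apply: ler_sum => i _.
  case: ifP => H.
    have [h _] := geq i; move: h; rewrite gbelow // => h.
    have -> : f i = 2 * gsum P i by lra.
    rewrite mulrCA mulrA; lra.
  have := gsum0 i; have := v_pos i; nra.
have V : \sum_(i : 'I_n | (i < k)%N) (if (s < i)%N then f i * (v i - v s) else 0) <= 2 * SCa.
  have -> : \sum_(i : 'I_n | (i < k)%N) (if (s < i)%N then f i * (v i - v s) else 0)
     = 2 * \sum_(i : 'I_n | (i < k)%N) (if (s < i)%N then (v i - v s) * tsum P i else 0).
    rewrite mulr_sumr; apply: eq_bigr => i ik; case: ifP => si; last by rewrite mulr0.
    have [_ h] := geq i; move: h; rewrite (Hpast s (conj gs gbelow) i si ik) => h.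
    have -> : f i = 2 * tsum P i by lra.
    ring.
  rewrite ler_pM2l ?ltr0n //.
  rewrite /tsum /SCa.
  rewrite (eq_bigr (fun i => \sum_(p <- P) (if p.1.2 == i then (if (s < i)%N then (v i - v s) * (p.2 * rr p) else 0) else 0))); last first.
    move=> i _; case: ifP => si.
      rewrite mulr_sumr big_mkcond /=; apply: eq_bigr => p _; by case: ifP.
    by rewrite big1 // => p _; case: ifP.
  rewrite exchange_big /= big_seq [X in _ <= X]big_seq; apply: ler_sum => p pP.
  have [sl g0p] := Hp p pP; have [r0 r1] := rr_bounds sl.
  rewrite sum_eqsel.
  have ps_le : (p.1.1 <= s)%N.
    rewrite leqNgt; apply/negP => H; move: (Hg p pP s H) => h; by rewrite h ltxx in gs.
  have vps : v p.1.1 <= v s by rewrite (vle v_incr).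
  have vl : v p.1.1 < v p.1.2 by apply: v_incr.
  case: ifP => _; last by apply: term0.
  case: ifP => _; last by apply: term0.
  have := mulr_ge0 g0p (ltW r0); nra.
lra.
Qed.

End Alg.


Section Loop.
Variables (R : realType) (n : nat) (v : 'I_n -> R) (f : 'I_n -> R).
Hypothesis v_pos : forall i, 0 < v i.
Hypothesis v_incr : forall i j : 'I_n, (i < j)%N -> v i < v j.
Hypothesis f_pos : forall i, 0 < f i.

Record Inv (g t : {ffun 'I_n -> R}) (P : seq (trip R n)) : Prop := {
 inv_g0 : forall i, 0 <= g i;
 inv_t0 : forall i, 0 <= t i;
 inv_eq : forall i, g i = f i / 2 - gsum v P i /\ t i = f i / 2 - tsum v P i;
 inv_p : forall p, p \in P -> (p.1.1 < p.1.2)%N /\ 0 <= p.2;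
 inv_gz : forall p, p \in P -> forall i : 'I_n, (i < p.1.1)%N -> g i = 0;
 inv_np : forall k, ~ past k g t -> forall p, p \in P -> (p.1.2 < k)%N;
 inv_b : forall k, past k g t -> Bound v f k P }.

Definition mu (g t : {ffun 'I_n -> R}) :=
  (#|[pred i | (0 < g i)%R]| + #|[pred i | (0 < t i)%R]|)%N.

Lemma firstg_uniq (g : {ffun 'I_n -> R}) s s0 :
  first_idx (fun s => 0 < g s) = Some s -> firstg g s0 -> s0 = s.
Proof.
move=> E [g0 H]; have [gs Hs] := first_idxP E.
apply: (first_idx_uniq (P := fun s => 0 < g s)) => //.
by move=> k ks; rewrite (H k ks) ltxx.
Qed.

Lemma SC_rcons k P (x : trip R n) : (x.1.1 < x.1.2)%N -> 0 <= x.2 ->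
  SC v k P <= SC v k (rcons P x).
Proof.
move=> sl g0; rewrite /SC big_rcons /= lerDl; case: ifP => _ //.
have [r0 _] := rr_bounds v_pos v_incr sl.
apply: mulr_ge0 => //; apply: mulr_ge0; last exact: ltW.
by rewrite subr_ge0 ltW //; apply: v_incr.
Qed.

Lemma Bound_mono k P P' : SC v k P <= SC v k P' -> Bound v f k P -> Bound v f k P'.
Proof.
move=> H [[j Hj]|Hb]; [left; exists j|right]; lra.
Qed.

Lemma card_lt (A B : pred 'I_n) (x : 'I_n) :
  (forall i, A i -> B i) -> B x -> ~~ A x -> (#|A| < #|B|)%N.
Proof.
move=> AB Bx Ax; apply: proper_card; apply/fintype.properP; split.
  by apply/fintype.subsetP => i; apply: AB.
by exists x.
Qed.

Lemma card_le (A B : pred 'I_n) :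
  (forall i, A i -> B i) -> (#|A| <= #|B|)%N.
Proof. by move=> AB; apply: subset_leq_card; apply/fintype.subsetP => i; apply: AB. Qed.

Lemma step_inv (g t : {ffun 'I_n -> R}) P s l :
  Inv g t P -> first_idx (fun s => 0 < g s) = Some s ->
  first_idx (fun l => (s < l)%N && (0 < t l)) = Some l ->
  let r := v s / v l in
  let gam := Num.min (g s / (1 - r)) (t l / r) in
  let g' := [ffun i => if i == s then g s - gam * (1 - r) else g i] in
  let t' := [ffun i => if i == l then t l - gam * r else t i] in
  Inv g' t' (rcons P (s, l, gam)) /\ (mu g' t' < mu g t)%N.
Proof.
move=> HI E1 E2 r gam g' t'.
have [gs Hs] := first_idxP E1.
have [/andP[sl tl] Hl] := first_idxP E2.
have [r0 r1] : 0 < r /\ r < 1 := rr_bounds (p := (s, l, 0)) v_pos v_incr sl.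
have r1' : 0 < 1 - r by lra.
have gam_pos : 0 < gam by rewrite /gam lt_min; apply/andP; split; apply: divr_gt0.
have hg : gam * (1 - r) <= g s.
  by rewrite -ler_pdivlMr // /gam ge_min lexx.
have ht : gam * r <= t l.
  by rewrite -ler_pdivlMr // /gam ge_min lexx orbT.
have gr0 : 0 <= gam * (1 - r) by apply: mulr_ge0; apply: ltW.
have gr1 : 0 <= gam * r by apply: mulr_ge0; apply: ltW.
have g'E i : g' i = if i == s then g s - gam * (1 - r) else g i by rewrite ffunE.
have t'E i : t' i = if i == l then t l - gam * r else t i by rewrite ffunE.
have g'le i : g' i <= g i by rewrite g'E; case: eqP => [->|_]; lra.
have t'le i : t' i <= t i by rewrite t'E; case: eqP => [->|_]; lra.
have g'0 i : 0 <= g' i by rewrite g'E; case: eqP => [_|_]; [lra | exact: (inv_g0 HI i)].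
have t'0 i : 0 <= t' i by rewrite t'E; case: eqP => [_|_]; [lra | exact: (inv_t0 HI i)].
have fs : firstg g s.
  split=> // i is'; apply/eqP; rewrite eq_le (inv_g0 HI) andbT leNgt; exact: Hs.
have past_mono k : past k g t -> past k g' t'.
  move=> Hp s' [gs' Hs'] l0 sl0 l0k.
  have ss' : (s <= s')%N.
    rewrite leqNgt; apply/negP => s's.
    move: gs'; rewrite g'E.
    have -> : (s' == s) = false by apply/negbTE; rewrite neq_ltn s's.
    by rewrite (fs.2 s' s's) ltxx.
  have := Hp s fs l0 (leq_ltn_trans ss' sl0) l0k => h.
  by apply/eqP; rewrite eq_le t'0 andbT -h t'le.
have past_ge k : (k <= l)%N -> past k g t.
  move=> kl s0 f0 l0 s0l0 l0k; rewrite (firstg_uniq E1 f0) in s0l0.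
  have := Hl l0 (leq_trans l0k kl); rewrite s0l0 /= => h.
  by apply/eqP; rewrite eq_le (inv_t0 HI) andbT leNgt.
set P' := rcons P (s, l, gam).
have memP' p : p \in P' -> p = (s, l, gam) \/ p \in P.
  by rewrite mem_rcons in_cons => /orP [/eqP ->|]; [left|right].
have inv_p' : forall p, p \in P' -> (p.1.1 < p.1.2)%N /\ 0 <= p.2.
  move=> p /memP' [->|pP]; [split => //; exact: ltW | exact: (inv_p HI pP)].
have inv_eq' : forall i, g' i = f i / 2 - gsum v P' i /\ t' i = f i / 2 - tsum v P' i.
  move=> i; rewrite /gsum /tsum !big_rcons /= g'E t'E.
  have [h1 h2] := inv_eq HI i; rewrite /rr /=.
  split; case: (eqVneq i _) => [->|H]; rewrite ?eqxx; try rewrite eq_sym (negbTE H).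
  - rewrite (inv_eq HI s).1 /gsum /r; lra.
  - rewrite h1 /gsum; lra.
  - rewrite (inv_eq HI l).2 /tsum /r; lra.
  - rewrite h2 /tsum; lra.
have inv_gz' : forall p, p \in P' -> forall i : 'I_n, (i < p.1.1)%N -> g' i = 0.
  move=> p /memP' [->|pP] i ip /=.
    rewrite g'E; have -> : (i == s) = false by apply/negbTE; rewrite neq_ltn ip.
    exact: fs.2.
  rewrite g'E; case: (eqVneq i s) => [Eis|_]; last first.
    exact (inv_gz HI pP ip).
  by rewrite Eis in ip; move: gs; rewrite (inv_gz HI pP ip) ltxx.
have np_old k : ~ past k g t -> (forall p, p \in P -> (p.1.2 < k)%N) /\ (l < k)%N.
  move=> Hnp0.
  split; first exact (inv_np HI Hnp0).
  rewrite ltnNge; apply/negP => H; apply: Hnp0; exact: past_ge.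
have inv_np' : forall k, ~ past k g' t' -> forall p, p \in P' -> (p.1.2 < k)%N.
  move=> k Hnp.
  have Hnp0 : ~ past k g t by move=> H; apply: Hnp; apply: past_mono.
  move=> p /memP' [->|pP]; have [h1 h2] := np_old k Hnp0 => //.
  exact: h1.
split.
  split => //.
  move=> k Hpk.
  case: (classic (past k g t)) => Hpast.
    apply: Bound_mono (inv_b HI Hpast).
    apply: SC_rcons => //; exact: ltW.
  apply: (@core_bound R n v f v_pos v_incr f_pos k g' t' P') => //.
  move=> p /memP' [->|pP]; have [h1 h2] := np_old k Hpast => //.
  exact: h1.
have Ale : forall i, 0 < g' i -> 0 < g i by move=> i h; apply: lt_le_trans h (g'le i).
have Ble : forall i, 0 < t' i -> 0 < t i by move=> i h; apply: lt_le_trans h (t'le i).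
rewrite /mu; case: (leP (g s / (1 - r)) (t l / r)) => hab.
  have g's : g' s = 0.
    rewrite g'E eqxx /gam (min_l hab); field; by rewrite gt_eqF.
  rewrite -addSn; apply: leq_add.
    apply: (@card_lt _ _ s) => /=.
    - exact: Ale.
    - exact: gs.
    - by rewrite g's ltxx.
  apply: card_le => i /=; exact: Ble.
have t'l : t' l = 0.
  rewrite t'E eqxx /gam (min_r (ltW hab)); field; by rewrite gt_eqF.
rewrite -addnS; apply: leq_add.
  apply: card_le => i /=; exact: Ale.
apply: (@card_lt _ _ l) => /=.
- exact: Ble.
- exact: tl.
- by rewrite t'l ltxx.
Qed.

Lemma sm_loopS fuel (g t : {ffun 'I_n -> R}) acc :
  sm_loop v fuel.+1 g t acc =
    match first_idx (fun s => 0 < g s) with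
    | None => acc
    | Some s =>
      match first_idx (fun l => (s < l)%N && (0 < t l)) with
      | None => acc
      | Some l =>
        let r := v s / v l in
        let gam := Num.min (g s / (1 - r)) (t l / r) in
        let g' := [ffun i => if i == s then g s - gam * (1 - r) else g i] in
        let t' := [ffun i => if i == l then t l - gam * r else t i] in
        sm_loop v fuel g' t' (rcons acc (eq_rev_signal v s l, gam))
      end
    end.
Proof. by []. Qed.

Lemma loop_ok fuel : forall (g t : {ffun 'I_n -> R}) P, Inv g t P -> (mu g t < fuel)%N ->
  exists P', sm_loop v fuel g t (map (mk v) P) = map (mk v) P' /\
    (forall k, Bound v f k P') /\
    (forall p, p \in P' -> (p.1.1 < p.1.2)%N /\ 0 <= p.2).
Proof.
elim: fuel => [//|fuel IH] g t P HI mufuel.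
rewrite sm_loopS.
case E1: (first_idx (fun s => 0 < g s)) => [s|]; last first.
  exists P; split => //; split; last exact (inv_p HI).
  move=> k; apply: (inv_b HI) => s0 [gs0 _].
  by move: (first_idxNone E1 s0); rewrite gs0.
case E2: (first_idx (fun l => (s < l)%N && (0 < t l))) => [l|]; last first.
  exists P; split => //; split; last exact (inv_p HI).
  move=> k; apply: (inv_b HI) => s0 fs0 l0 sl0 _.
  rewrite (firstg_uniq E1 fs0) in sl0.
  have := first_idxNone E2 l0; rewrite sl0 /= => h.
  by apply/eqP; rewrite eq_le (inv_t0 HI l0) andbT leNgt.
have [HI' mu'] := step_inv HI E1 E2.
move: HI' mu'; set r := v s / v l; set gam := Num.min _ _.
set g' := [ffun i => _]; set t' := [ffun i => _] => HI' mu'.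
rewrite /= -/r -/gam -/g' -/t'.
have -> : rcons (map (mk v) P) (eq_rev_signal v s l, gam) = map (mk v) (rcons P (s, l, gam)).
  by rewrite map_rcons.
apply: IH HI' _.
exact: (leq_trans mu' mufuel).
Qed.

End Loop.


Section Prefix.
Variables (R : realType) (n : nat) (v : 'I_n -> R) (f : 'I_n -> R).
Hypothesis v_pos : forall i, 0 < v i.
Hypothesis v_incr : forall i j : 'I_n, (i < j)%N -> v i < v j.
Hypothesis f_pos : forall i, 0 < f i.

Definition AA (Z : scheme R n) (i : 'I_n) := \sum_(q <- Z) cs v q.1 (v i) * q.2 * q.1 i.

Lemma binary_ok : exists P', sm_binary v f = map (mk v) P' /\
    (forall k, Bound v f k P') /\
    (forall p, p \in P' -> (p.1.1 < p.1.2)%N /\ 0 <= p.2).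
Proof.
set g0 : {ffun 'I_n -> R} := [ffun i => f i / 2].
have g0E i : g0 i = f i / 2 by rewrite ffunE.
have g00 i : 0 <= g0 i by rewrite g0E; have := f_pos i; lra.
have eq0 i : g0 i = f i / 2 - gsum v [::] i /\ g0 i = f i / 2 - tsum v [::] i.
  by rewrite /gsum /tsum !big_nil subr0 g0E.
have HI : Inv v f g0 g0 [::].
  apply: Build_Inv.
  - exact: g00.
  - exact: g00.
  - exact: eq0.
  - by move=> p; rewrite in_nil.
  - by move=> p; rewrite in_nil.
  - by move=> k _ p; rewrite in_nil.
  - move=> k Hk; apply: (@core_bound R n v f v_pos v_incr f_pos k g0 g0 [::]) => //.
have mu0 : (mu g0 g0 < (2 * n).+1)%N.
  rewrite ltnS mul2n -addnn /mu; apply: leq_add; 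
    by apply: leq_trans (max_card _) _; rewrite card_ord.
have [P' [E [HB Hp]]] := loop_ok v_pos v_incr f_pos HI mu0.
by exists P'; split => //.
Qed.



Lemma Z0_prefix (P' : seq (trip R n)) (k : nat) : (forall p, p \in P' -> (p.1.1 < p.1.2)%N /\ 0 <= p.2) ->
  sm_binary v f = map (mk v) P' ->
  \sum_(i : 'I_n | (i < k)%N) AA (split_and_match v f) i = SC v k P'.
Proof.
move=> Hp E; rewrite /AA /split_and_match E.
under eq_bigr do rewrite big_cat /=.
rewrite big_split /=.
have -> : \sum_(i : 'I_n | (i < k)%N)
    \sum_(q <- [seq (singleton_signal R i0, f i0 - \sum_(q0 <- [seq mk v i1 | i1 <- P']) q0.2 * q0.1 i0) | i0 <- enum 'I_n]) cs v q.1 (v i) * q.2 * q.1 i = 0.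
  apply: big1 => i _; rewrite big_map; apply: big1 => a _ /=; exact: single_cs.
rewrite addr0 /SC [RHS]big_mkcond /=.
under eq_bigr do rewrite big_map /=.
rewrite exchange_big /= big_seq [RHS]big_seq; apply: eq_bigr => p pP.
have [sl _] := Hp p pP.
rewrite (eq_bigr (fun i => p.2 * (if i == p.1.2 then (v p.1.2 - v p.1.1) * (v p.1.1 / v p.1.2) else 0))); last first.
  by move=> i _; rewrite mulrAC mulrC (eqrev_cs v_pos v_incr _ sl).
by rewrite -mulr_sumr sum_if_eq /rr; case: ifP => _; rewrite ?mulr0.
Qed.

Lemma Zp_prefix (Z : scheme R n) k (j : 'I_n) : is_scheme f Z ->
  \sum_(i : 'I_n | (i < k)%N) AA Z i + v j * \sum_(i : 'I_n | (j <= i)%N && (i < k)%N) f i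
  <= Wk v f k.
Proof.
move=> [HZ1 [HZ2 HZ3]].
have E1 : \sum_(i : 'I_n | (i < k)%N) AA Z i
   = \sum_(q <- Z) q.2 * \sum_(i : 'I_n | (i < k)%N) cs v q.1 (v i) * q.1 i.
  rewrite /AA exchange_big /=; apply: eq_bigr => q _; rewrite mulr_sumr.
  by apply: eq_bigr => i _; rewrite mulrAC mulrC.
have E2 : v j * \sum_(i : 'I_n | (j <= i)%N && (i < k)%N) f i
   = \sum_(q <- Z) q.2 * (v j * \sum_(i : 'I_n | (j <= i)%N && (i < k)%N) q.1 i).
  under eq_bigr do rewrite -HZ3.
  rewrite exchange_big mulr_sumr /=; apply: eq_bigr => q _.
  rewrite !mulr_sumr; apply: eq_bigr => i _; by rewrite mulrCA.
have E3 : Wk v f k = \sum_(q <- Z) q.2 * \sum_(i : 'I_n | (i < k)%N) q.1 i * v i.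
  rewrite /Wk; under eq_bigr do rewrite -HZ3 mulr_suml.
  rewrite exchange_big /=; apply: eq_bigr => q _; rewrite mulr_sumr.
  by apply: eq_bigr => i _; rewrite mulrA.
rewrite E1 E2 E3 -big_split /= big_seq [X in _ <= X]big_seq; apply: ler_sum => q qZ.
have [HS g0] := HZ1 q qZ; rewrite -mulrDr; apply: ler_wpM2l => //.
exact: sig_bound.
Qed.

Lemma Zp_prefix0 (Z : scheme R n) k : is_scheme f Z ->
  \sum_(i : 'I_n | (i < k)%N) AA Z i <= Wk v f k.
Proof.
move=> [HZ1 [HZ2 HZ3]].
have E1 : \sum_(i : 'I_n | (i < k)%N) AA Z i
   = \sum_(q <- Z) q.2 * \sum_(i : 'I_n | (i < k)%N) cs v q.1 (v i) * q.1 i.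
  rewrite /AA exchange_big /=; apply: eq_bigr => q _; rewrite mulr_sumr.
  by apply: eq_bigr => i _; rewrite mulrAC mulrC.
have E3 : Wk v f k = \sum_(q <- Z) q.2 * \sum_(i : 'I_n | (i < k)%N) q.1 i * v i.
  rewrite /Wk; under eq_bigr do rewrite -HZ3 mulr_suml.
  rewrite exchange_big /=; apply: eq_bigr => q _; rewrite mulr_sumr.
  by apply: eq_bigr => i _; rewrite mulrA.
rewrite E1 E3 big_seq [X in _ <= X]big_seq; apply: ler_sum => q qZ.
have [HS g0] := HZ1 q qZ; apply: ler_wpM2l => //.
exact: sig_bound0.
Qed.

Lemma prefix_main (Z : scheme R n) k : is_scheme f Z ->
  \sum_(i : 'I_n | (i < k)%N) AA Z i <= 4 * \sum_(i : 'I_n | (i < k)%N) AA (split_and_match v f) i.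
Proof.
move=> HZ; have [P' [E [HB Hp]]] := binary_ok.
rewrite (Z0_prefix k Hp E).
case: (HB k) => [[j Hj]|Hj].
  have := Zp_prefix k j HZ; lra.
have := Zp_prefix0 k HZ; lra.
Qed.

End Prefix.


Section Integ.
Local Open Scope classical_set_scope.
Variable (R : realType).

Lemma indic_itv (a b x : R) : (\1_(`]a, b]) x : R) = if (a < x) && (x <= b) then 1 else 0.
Proof. by rewrite indicE mem_setE in_itv /=; case: ((a < x) && (x <= b)). Qed.

Lemma itv_meas (a b m : R) : 0 <= a ->
  lebesgue_measure (`]a, b] `&` `]0%R, m] : set R) = (if a < Num.min b m then Num.min b m - a else 0)%:E.
Proof.
move=> a0.
have -> : `]a, b] `&` `]0%R, m] = `]a, Num.min b m] :> set R.
  apply/seteqP; split => x /=; rewrite !in_itv /= le_min.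
    by move=> [/andP [ax xb] /andP [x0 xm]]; rewrite ax xb xm.
  move=> /andP [ax /andP [xb xm]]; split; apply/andP; split => //.
  exact: le_lt_trans a0 ax.
rewrite lebesgue_measure_itv /= lte_fin.
by case: ifP => _; rewrite ?EFinB.
Qed.


Lemma if_indic (a b x c : R) :
  (if (a < x) && (x <= b) then c else 0) = c * \1_(`]a, b]) x.
Proof. by rewrite indic_itv; case: ifP; rewrite ?mulr1 ?mulr0. Qed.

Lemma integral_step (n : nat) (c a b : 'I_n -> R) (m : R) :
  (forall i, 0 <= c i) -> (forall i, 0 <= a i) ->
  (\int[lebesgue_measure]_(x in `]0%R, m]) (\sum_i (if (a i < x) && (x <= b i) then c i else 0))%:E
   = (\sum_i c i * (if a i < Num.min (b i) m then Num.min (b i) m - a i else 0))%:E)%E.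
Proof.
move=> c0 a0.
have mD : measurable (`]0%R, m] : set R) by exact: measurable_itv.
under eq_integral => x _ do rewrite -sumEFin.
under eq_integral => x _ do under eq_bigr => i _ do rewrite if_indic.
have mf i := proj2 (measurable_realfun.measurable_EFinP _ _) (measurable_realfun.measurable_funM (D := `]0%R, m]) (measurable_cst (c i)) (measurable_realfun.measurable_indic (D := `]0%R, m]) (measurable_itv (Interval (BRight (a i)) (BRight (b i)))))).
have f0 : forall i x, (`]0%R, m] : set R) x -> (0 <= (c i * \1_(`]a i, b i]) x)%:E)%E.
  by move=> i x _; rewrite lee_fin; apply: mulr_ge0.
rewrite ge0_integral_sum //; try (move=> i; exact: mf); try (move=> i x Dx; exact: f0).
rewrite -sumEFin; apply: eq_bigr => i _.
rewrite (@integralZl_indic _ _ R lebesgue_measure _ mD (fun _ => `]a i, b i]) (c i)) //; last first.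
  by move=> h; move: (c0 i); rewrite leNgt h.
rewrite (@integral_indic _ _ R lebesgue_measure _ mD _ (measurable_itv (Interval (BRight (a i)) (BRight (b i))))).
rewrite EFinM; congr (_ * _)%E; exact: itv_meas.
Qed.

End Integ.

Section Abel.
Variables (R : realType) (n : nat).

Lemma sum_ltS (K : nat) (Kn : (K < n)%N) (F : 'I_n -> R) :
  \sum_(i : 'I_n | (i < K.+1)%N) F i = \sum_(i : 'I_n | (i < K)%N) F i + F (Ordinal Kn).
Proof.
rewrite (bigD1 (Ordinal Kn)) /=; last by rewrite ltnSn.
rewrite addrC; congr (_ + _); apply: eq_bigl => i.
rewrite ltnS -val_eqE /=; by case: (ltngtP i K).
Qed.

Lemma abel (d w : 'I_n -> R) :
  (forall k : nat, 0 <= \sum_(i : 'I_n | (i < k)%N) d i) ->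
  (forall i, 0 <= w i) -> (forall i j : 'I_n, (i <= j)%N -> w j <= w i) ->
  0 <= \sum_i w i * d i.
Proof.
move=> Hd w0 wm.
suff H : forall K (w : 'I_n -> R), (forall i : 'I_n, (i < K)%N -> 0 <= w i) ->
    (forall i j : 'I_n, (i <= j)%N -> (j < K)%N -> w j <= w i) ->
    0 <= \sum_(i : 'I_n | (i < K)%N) w i * d i.
  have := H n w (fun i _ => w0 i) (fun i j ij _ => wm i j ij).
  have -> : \sum_(i : 'I_n | (i < n)%N) w i * d i = \sum_i w i * d i.
    by apply: eq_bigl => i; rewrite ltn_ord.
  done.
elim=> [|K IH] w' w0' wm'.
  rewrite big_pred0; first done.
  by move=> i; rewrite ltn0.
case: (ltnP K n) => Kn.
  set o := Ordinal Kn; set c := w' o.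
  have c0 : 0 <= c by apply: w0'; rewrite /= ltnSn.
  have IH' := IH (fun i => w' i - c).
  have h1 : 0 <= \sum_(i : 'I_n | (i < K)%N) (w' i - c) * d i.
    apply: IH'.
      move=> i iK; rewrite subr_ge0; apply: wm'; [exact: ltnW | by rewrite /= ltnSn].
    move=> i j ij jK; rewrite lerD2r; apply: wm' => //; exact: ltnW.
  have h2 := mulr_ge0 c0 (Hd K.+1).
  have -> : \sum_(i : 'I_n | (i < K.+1)%N) w' i * d i
      = \sum_(i : 'I_n | (i < K)%N) (w' i - c) * d i + c * \sum_(i : 'I_n | (i < K.+1)%N) d i.
    rewrite !(sum_ltS Kn) mulrDr mulr_sumr -/o -/c.
    rewrite addrA -big_split /=; congr (_ + _); apply: eq_bigr => i _; ring.
  exact: addr_ge0.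
have -> : \sum_(i : 'I_n | (i < K.+1)%N) w' i * d i = \sum_(i : 'I_n | (i < K)%N) w' i * d i.
  apply: eq_bigl => i; by rewrite (leq_trans (ltn_ord i) Kn) (leq_trans (ltn_ord i) (leq_trans Kn (leqnSn K))).
apply: IH.
  move=> i iK; apply: w0'; exact: ltnW.
move=> i j ij jK; apply: wm' => //; exact: ltnW.
Qed.

End Abel.


Section Main.
Local Open Scope classical_set_scope.
Variables (R : realType) (n : nat) (v : 'I_n -> R) (f : 'I_n -> R).
Hypothesis v_pos : forall i, 0 < v i.
Hypothesis v_incr : forall i j : 'I_n, (i < j)%N -> v i < v j.
Hypothesis f_pos : forall i, 0 < f i.

Lemma cs_ge0 (S : signal R n) x : 0 <= cs v S x.
Proof. rewrite /cs; case: ifP => // h; by rewrite subr_ge0. Qed.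

Lemma cs_schemeE Z i : cs_scheme v f Z i = AA v Z i / f i.
Proof. by rewrite /cs_scheme /AA mulr_suml. Qed.

Lemma AA_Zp_ge0 Z i : is_scheme f Z -> 0 <= AA v Z i.
Proof.
move=> [HZ1 _]; rewrite /AA big_seq; apply: sumr_ge0 => q qZ.
have [[S0 _] g0] := HZ1 q qZ.
by apply: mulr_ge0; [apply: mulr_ge0; [exact: cs_ge0|] | exact: S0].
Qed.

Lemma AA_Z0_ge0 i : 0 <= AA v (split_and_match v f) i.
Proof.
have [P' [E [_ Hp]]] := binary_ok v_pos v_incr f_pos.
rewrite /AA /split_and_match E big_cat /=.
apply: addr_ge0.
  rewrite big_map big_seq; apply: sumr_ge0 => p pP /=.
  have [sl g0] := Hp p pP.
  rewrite mulrAC (eqrev_cs v_pos v_incr _ sl); apply: mulr_ge0 => //.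
  case: ifP => _ //; apply: mulr_ge0.
    by rewrite subr_ge0 ltW //; apply: v_incr.
  by apply: ltW; apply: divr_gt0.
rewrite big_map; apply: sumr_ge0 => a _; by rewrite /= single_cs.
Qed.

Definition Lw (m : R) (i : 'I_n) :=
  if Fprev f i < Num.min (Fcur f i) m then Num.min (Fcur f i) m - Fprev f i else 0.

Lemma Fprev_ge0 i : 0 <= Fprev f i.
Proof. by apply: sumr_ge0 => j _; apply: ltW. Qed.

Lemma FcurE i : Fcur f i = Fprev f i + f i.
Proof.
rewrite /Fcur (bigD1 i) //= addrC; congr (_ + _).
apply: eq_bigl => j; rewrite -val_eqE /=; by case: ltngtP.
Qed.

Lemma Fcur_le (i j : 'I_n) : (i < j)%N -> Fcur f i <= Fprev f j.
Proof.
move=> ij; rewrite /Fcur /Fprev [X in _ <= X](bigID (fun k : 'I_n => (k <= i)%N)) /=.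
have -> : \sum_(k : 'I_n | (k < j)%N && (k <= i)%N) f k = \sum_(k : 'I_n | (k <= i)%N) f k.
  apply: eq_bigl => k; case: (leqP k i) => ki; last by rewrite andbF.
  by rewrite andbT (leq_ltn_trans ki ij).
rewrite lerDl; apply: sumr_ge0 => k _; exact: ltW.
Qed.

Lemma L0 m i : 0 <= Lw m i.
Proof. rewrite /Lw; case: ifP => // h; by rewrite subr_ge0 ltW. Qed.

Lemma Lf m i : Lw m i <= f i.
Proof.
rewrite /Lw; case: ifP => h; last exact: ltW.
have : Num.min (Fcur f i) m <= Fcur f i by rewrite ge_min lexx.
rewrite FcurE; lra.
Qed.

Lemma Ldrop m (i j : 'I_n) : Lw m i < f i -> (i < j)%N -> Lw m j = 0.
Proof.
move=> Hl ij.
have h1 : Num.min (Fcur f i) m < Fcur f i.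
  move: Hl; rewrite /Lw; case: ifP => h.
    rewrite FcurE; lra.
  move=> _; move: h => /negbT; rewrite -leNgt => h.
  have := f_pos i; rewrite FcurE in h *; lra.
have h2 : m < Fcur f i by move: h1; rewrite gt_min ltxx /=.
have h3 := Fcur_le ij.
rewrite /Lw; case: ifP => // h.
have : Num.min (Fcur f j) m <= m by rewrite ge_min lexx orbT.
lra.
Qed.

Lemma main_ineq (Z' : scheme R n) (HZ' : is_scheme f Z') (m : R) :
  (\int[lebesgue_measure]_(x in `]0%R, m]) (surplus_mass v f Z' x)%:E
   <= 4%:E * \int[lebesgue_measure]_(x in `]0%R, m]) (surplus_mass v f (split_and_match v f) x)%:E)%E.
Proof.
set Z0 := split_and_match v f.
have c0' i : 0 <= cs_scheme v f Z' i.
  by rewrite cs_schemeE; apply: divr_ge0; [exact: AA_Zp_ge0 | exact: ltW].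
have c00 i : 0 <= cs_scheme v f Z0 i.
  by rewrite cs_schemeE; apply: divr_ge0; [exact: AA_Z0_ge0 | exact: ltW].
have I1 : (\int[lebesgue_measure]_(x in `]0%R, m]) (surplus_mass v f Z' x)%:E
    = (\sum_i cs_scheme v f Z' i * Lw m i)%:E)%E :=
  @integral_step R n (cs_scheme v f Z') (Fprev f) (Fcur f) m c0' Fprev_ge0.
have I2 : (\int[lebesgue_measure]_(x in `]0%R, m]) (surplus_mass v f Z0 x)%:E
    = (\sum_i cs_scheme v f Z0 i * Lw m i)%:E)%E :=
  @integral_step R n (cs_scheme v f Z0) (Fprev f) (Fcur f) m c00 Fprev_ge0.
rewrite I1 I2 -EFinM lee_fin.
pose w i := Lw m i / f i.
pose d i := 4 * AA v Z0 i - AA v Z' i.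
have Hd k : 0 <= \sum_(i : 'I_n | (i < k)%N) d i.
  rewrite /d sumrB -mulr_sumr subr_ge0; exact: prefix_main.
have w0 i : 0 <= w i by apply: divr_ge0; [exact: L0 | exact: ltW].
have wm (i j : 'I_n) : (i <= j)%N -> w j <= w i.
  rewrite leq_eqVlt => /orP [/eqP ij | ij].
    have Eij : i = j := val_inj ij.
    rewrite Eij; exact: lexx.
  case: (ltP (Lw m i) (f i)) => h.
    rewrite /w (Ldrop h ij) mul0r; exact: (w0 i).
  have -> : w i = 1.
    rewrite /w; have := Lf m i => h'.
    have -> : Lw m i = f i by apply/eqP; rewrite eq_le h h'.
    by rewrite divff // gt_eqF.
  by rewrite /w ler_pdivrMr // mul1r; apply: Lf.
have Hab := abel Hd w0 wm.
have E1 : \sum_i cs_scheme v f Z' i * Lw m i = \sum_i w i * AA v Z' i.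
  by apply: eq_bigr => i _; rewrite cs_schemeE /w; ring.
have E2 : \sum_i cs_scheme v f Z0 i * Lw m i = \sum_i w i * AA v Z0 i.
  by apply: eq_bigr => i _; rewrite cs_schemeE /w; ring.
have E3 : \sum_i w i * d i = 4 * \sum_i w i * AA v Z0 i - \sum_i w i * AA v Z' i.
  rewrite mulr_sumr -sumrB; apply: eq_bigr => i _; rewrite /d; ring.
rewrite E1 E2; lra.
Qed.

End Main.

Local Open Scope classical_set_scope.

Theorem lemma1 (R : realType) (n : nat) (v : 'I_n -> R) (f : 'I_n -> R)
  (v_pos : forall i, 0 < v i)
  (v_incr : forall i j : 'I_n, (i < j)%N -> v i < v j)
  (f_pos : forall i, 0 < f i)
  (f_sum : \sum_i f i = 1)
  (Z' : scheme R n) (HZ' : is_scheme f Z')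
  (m : R) (m_pos : 0 < m) (m_le1 : m <= 1) :
  (\int[lebesgue_measure]_(x in `]0%R, m]) (surplus_mass v f Z' x)%:E
   <= 4%:E * \int[lebesgue_measure]_(x in `]0%R, m]) (surplus_mass v f (split_and_match v f) x)%:E)%E.
Proof. exact: (main_ineq v_pos v_incr f_pos HZ' m). Qed.
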